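(* Let $A$ be a nonempty subset of a real vector space $X$, and let $\{A_i\}_{i\in I}$ be the convex components of $A$, i.e. the pairwise distinct maximal convex subsets of $A$ (whose union is $A$). Then $$int_c(A)=\bigcup_{i\in I}cor(A_i).$$
   Context: For $A\subseteq X$, $cor(A):=\{x\in A:\ \forall x'\in X\ \exists \lambda'>0 \text{ such that } x+\lambda x'\in A \text{ for all } \lambda\in[0,\lambda']\}$. The core convex topology $\tau_c$ on $X$ is the topology whose open sets are exactly the unions of families of sets $B\subseteq X$ that are convex and satisfy $cor(B)=B$. $int_c(A)$ denotes the interior of $A$ with respect to $\tau_c$. *)

(* Defs.v *)
From HB Require Import structures.
From mathcomp Require Import all_boot all_order all_algebra.
From mathcomp Require Import all_classical all_reals.
From mathcomp Require Import topology convex.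
Set Implicit Arguments. Unset Strict Implicit. Unset Printing Implicit Defensive.
Import Order.TTheory GRing.Theory Num.Theory.
Local Open Scope ring_scope.
Local Open Scope classical_set_scope.

Section CoreConvex.
Variables (R : realType) (X : lmodType R).

Definition cor (A : set X) : set X :=
  [set x | A x /\ forall x' : X, exists2 l' : R, 0 < l' &
             forall l : R, 0 <= l <= l' -> A (x + l *: x')].

Definition convex (A : set X) : Prop := convex_set (A : set (convex_lmodType X)).

Definition tau_c_open (U : set X) : Prop :=
  exists F : set (set X),
    (forall B, F B -> convex B /\ cor B = B) /\ U = \bigcup_(B in F) B.

Definition int_c (A : set X) : set X :=
  [set x | exists U : set X, [/\ tau_c_open U, U `<=` A & U x]].

Definition convex_components (A : set X) : set (set X) :=
  [set C | [/\ convex C, C `<=` A &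
             forall D : set X, convex D -> D `<=` A -> C `<=` D -> D = C]].

End CoreConvex.

(* Main.v *)
Require Import Defs.
From HB Require Import structures.
From mathcomp Require Import all_boot all_order all_algebra.
From mathcomp Require Import all_classical all_reals.
From mathcomp Require Import topology convex interval_inference.
From mathcomp Require Import lra.
Import Order.TTheory GRing.Theory Num.Theory.
Local Open Scope ring_scope.
Local Open Scope classical_set_scope.

Lemma convexP (R : realType) (X : lmodType R) (C : set X) :
  convex C <-> forall x y (t : R), 0 <= t -> t <= 1 -> C x -> C y ->
     C (t *: x + (1 - t) *: y).
Proof.
split.
- move=> cC x y t t0 t1 Cx Cy.
  have := cC x y (Itv01 t0 t1) (mem_set Cx) (mem_set Cy).
  by move/set_mem.
- move=> H x y l xA yA; apply/mem_set.
  exact: (H x y l%:num (ge0 l) (le1 l) (set_mem xA) (set_mem yA)).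
Qed.

Section S.
Variables (R : realType) (X : lmodType R).
Implicit Types (A B C D : set X).

Lemma cor_sub C : cor C `<=` C.
Proof. by move=> x []. Qed.

Lemma cor_mono B C : B `<=` C -> cor B `<=` cor C.
Proof.
move=> BC x [Bx H]; split; first exact: BC.
move=> w; have [l' l'0 Hl] := H w; exists l' => // l hl; exact/BC/Hl.
Qed.

Lemma cor_seg C x y (s : R) : convex C -> cor C x -> C y -> 0 < s -> s <= 1 ->
  cor C (s *: x + (1 - s) *: y).
Proof.
move=> /convexP cC [Cx Hx] Cy s0 s1; split; first exact: (cC x y s (ltW s0) s1 Cx Cy).
move=> w; have [m m0 Hm] := Hx w.
exists (s * m); first exact: mulr_gt0.
move=> l /andP[l0 lm].
have Ha : C (x + (l / s) *: w).
  apply: Hm; apply/andP; split; first by rewrite divr_ge0 // ltW.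
  by rewrite ler_pdivrMr // mulrC.
have := cC _ _ s (ltW s0) s1 Ha Cy.
congr C.
rewrite scalerDr scalerA mulrC divfK ?gt_eqF //.
by rewrite addrAC.
Qed.

Lemma cor_convex C : convex C -> convex (cor C).
Proof.
move=> cC; apply/convexP => x y t t0 t1 cx cy.
have [->|tn0] := eqVneq t 0.
  by rewrite scale0r add0r subr0 scale1r.
apply: cor_seg => //; first exact: cor_sub.
by rewrite lt_neqAle eq_sym tn0.
Qed.

Lemma cor_idem C : convex C -> cor (cor C) = cor C.
Proof.
move=> cC; rewrite eqEsubset; split; first exact: cor_sub.
move=> x cx; split => // w.
have [m m0 Hm] := cx.2 w.
have Cy : C (x + m *: w) by apply: Hm; rewrite lexx andbT ltW.
exists (m / 2); first by apply: divr_gt0.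
move=> l /andP[l0 lm].
have Hq : 0 <= l / m <= 1 / 2.
  apply/andP; split; first exact: (divr_ge0 l0 (ltW m0)).
  by rewrite ler_pdivrMr // mulrC mul1r.
have -> : x + l *: w = (1 - l / m) *: x + (1 - (1 - l / m)) *: (x + m *: w).
  rewrite subKr scalerDr addrA -scalerDl subrK scale1r scalerA divfK ?gt_eqF //.
apply: cor_seg => //; move: Hq => /andP[h1 h2]; lra.
Qed.


Lemma extend A B : convex B -> B `<=` A ->
  exists C, convex_components A C /\ B `<=` C.
Proof.
move=> cB BA.
pose P := [set D : set X | convex (B `|` D) /\ B `|` D `<=` A].
have P0 : P set0 by rewrite /P /= setU0.
have [|D [[cD DA] Dmax]] := @Zorn_bigcup X P.
  move=> F FP Ftot; split.
    apply/convexP => x y t t0 t1 hx hy.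
    have [E [PE Ex Ey EF]] : exists E, [/\ P E, (B `|` E) x, (B `|` E) y
        & E `<=` \bigcup_(X in F) X].
      case: hx => [bx|[E1 FE1 E1x]]; case: hy => [b_y|[E2 FE2 E2y]].
      - by exists set0; split => //; left.
      - by exists E2; split => //; [exact: FP | left | right | exact: bigcup_sup].
      - by exists E1; split => //; [exact: FP | right | left | exact: bigcup_sup].
      - have [E12|E21] := Ftot _ _ FE1 FE2.
        + by exists E2; split => //;
            [exact: FP | right; exact: E12 | right | exact: bigcup_sup].
        + by exists E1; split => //;
            [exact: FP | right | right; exact: E21 | exact: bigcup_sup].
    move: PE => [/convexP cE _].
    have := cE x y t t0 t1 Ex Ey.
    by apply: setUS.
  move=> z [Bz|[E FE Ez]]; first exact: BA.
  by apply: (FP E FE).2; right.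
exists (B `|` D); split; last by move=> z Bz; left.
split => // E cE EA DE.
have [ED|nED] := pselect (E `<=` D).
  rewrite eqEsubset; split => // z Ez; right; exact: ED.
exfalso; apply: (Dmax E); first by split => // z Dz; apply: DE; right.
have BE : B `|` E = E by apply/setUidPr => z Bz; apply: DE; left.
by rewrite /P /= BE.
Qed.

End S.

Theorem theorem3p8 (R : realType) (X : lmodType R) (A : set X) :
  A !=set0 ->
  int_c A = \bigcup_(C in convex_components A) cor C.
Proof.
move=> _; rewrite eqEsubset; split.
  move=> x [U [[F [HF ->]] UA [B FB Bx]]].
  have [cB corB] := HF B FB.
  have BA : B `<=` A by move=> z Bz; apply: UA; exists B.
  have [C [compC BC]] := @extend R X A B cB BA.
  exists C => //; apply: (@cor_mono R X B C BC); by rewrite corB.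
move=> x [C [cC CA _] xc].
exists (cor C); split => //.
- exists [set cor C]; split; last by rewrite bigcup_set1.
  by move=> B ->; split; [exact: cor_convex | exact: cor_idem].
- by move=> z /cor_sub; apply: CA.
Qed.
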